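(* Let $A$ be a real $n\times n$ matrix, viewed as a linear operator on $H=\mathbb{R}^n$ with the Euclidean inner product $\langle\cdot,\cdot\rangle$ and norm $\|\cdot\|$, and let $\lambda$ be a real eigenvalue of $A$. Suppose there exists a sequence of triples $(\varepsilon_k,\eta_k,u_k)\in\mathbb{R}\times\mathbb{R}\times H$, $k\in\mathbb{N}$, such that for every $k$ $$(A-\lambda I)u_k=\varepsilon_k\big(|u_k|+\eta_k u_k\big),\qquad \varepsilon_k\neq 0,\qquad \|u_k\|=1,$$ and $(\varepsilon_k,\eta_k,u_k)\to(0,\eta_0,u_0)$ as $k\to\infty$ for some $\eta_0\in\mathbb{R}$, $u_0\in H$. Then necessarily $u_0\in\operatorname{Ker}(A-\lambda I)$, $u_0\neq 0$, and $$\langle |u_0|+\eta_0u_0,\,v\rangle=0\quad\text{for all } v\in\operatorname{Ker}(A^{*}-\lambda I),$$ i.e. the orthogonal projection of $|u_0|+\eta_0u_0$ onto $\operatorname{Ker}(A^*-\lambda I)$ is zero.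
   Context: $A^*$ denotes the transpose of $A$. For $u=[u_1,\dots,u_n]^t\in\mathbb{R}^n$, $|u|:=[|u_1|,\dots,|u_n|]^t$ (componentwise absolute value). The equation $(A-\lambda I)u=\varepsilon(|u|+\eta u)$ is the Fučík problem $Au=\alpha u^+-\beta u^-$ rewritten via $\alpha=\varepsilon(\eta+1)+\lambda$, $\beta=\varepsilon(\eta-1)+\lambda$, where $u^\pm$ are the componentwise positive and negative parts ($u_i^+=\max\{u_i,0\}$, $u_i^-=\max\{-u_i,0\}$). *)

(* Defs.v *)
From HB Require Import structures.
From mathcomp Require Import all_boot all_order all_algebra.
From mathcomp Require Import all_classical all_reals all_analysis.
Set Implicit Arguments. Unset Strict Implicit. Unset Printing Implicit Defensive.
Import Order.TTheory GRing.Theory Num.Theory.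
Local Open Scope ring_scope.

Definition dotv (R : realType) (n : nat) (u v : 'cV[R]_n) : R :=
  \sum_(i < n) u i 0 * v i 0.

Definition enorm (R : realType) (n : nat) (u : 'cV[R]_n) : R :=
  Num.sqrt (dotv u u).

Definition absv (R : realType) (n : nat) (u : 'cV[R]_n) : 'cV[R]_n :=
  \col_i `|u i 0|.

Definition is_real_eigenvalue (R : realType) (n : nat) (A : 'M[R]_n) (l : R) :=
  exists2 v : 'cV[R]_n, v != 0 & A *m v = l *: v.

(* Main.v *)
Set Warnings "-all".
Require Import Defs.
From HB Require Import structures.
From mathcomp Require Import all_boot all_order all_algebra.
From mathcomp Require Import all_classical all_reals all_analysis.
Import Order.TTheory GRing.Theory Num.Theory numFieldNormedType.Exports.
Local Open Scope classical_set_scope.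
Local Open Scope ring_scope.

Lemma entry_cvg (R : realType) m n (f : nat -> 'M[R]_(m,n)) (a : 'M[R]_(m,n)) i j :
  f k @[k --> \oo] --> a -> f k i j @[k --> \oo] --> a i j.
Proof.
move/cvg_mx_entourageP => H. apply/cvg_entourageP => A entA.
have HA := H A entA.
apply: (@filterS _ (\oo : set_system nat) _ _ _ _ HA) => k /= /(_ i j).
by rewrite inE.
Qed.

Lemma sum_cvg (R : realType) (I : finType) (F : I -> nat -> R) (a : I -> R) :
  (forall i, F i k @[k --> \oo] --> a i) ->
  (\sum_(i : I) F i k) @[k --> \oo] --> \sum_(i : I) a i.
Proof.
move=> H; apply: cvg_big.
- exact: add_continuous.
- by move=> i _; exact: H.
Qed.

Lemma uniq_lim (R : realType) (f : nat -> R) (a b : R) :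
  f k @[k --> \oo] --> a -> f k @[k --> \oo] --> b -> a = b.
Proof. by move=> Ha Hb; exact: (cvg_unique (@norm_hausdorff _ _) Ha Hb). Qed.

Lemma dot_mul (R : realType) n (B : 'M[R]_n) (x v : 'cV[R]_n) :
  dotv (B *m x) v = dotv x (B^T *m v).
Proof.
rewrite /dotv.
under eq_bigr => i _ do rewrite mxE big_distrl.
rewrite exchange_big /=; apply: eq_bigr => l _.
rewrite mxE big_distrr /=; apply: eq_bigr => i _.
by rewrite mxE -mulrA mulrCA.
Qed.

Lemma dot0r (R : realType) n (x : 'cV[R]_n) : dotv x 0 = 0.
Proof. by rewrite /dotv big1 // => i _; rewrite mxE mulr0. Qed.

Lemma dotZl (R : realType) n c (x v : 'cV[R]_n) : dotv (c *: x) v = c * dotv x v.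
Proof. by rewrite /dotv mulr_sumr; apply: eq_bigr => i _; rewrite mxE mulrA. Qed.

Lemma dot_cvg (R : realType) n (f : nat -> 'cV[R]_n) (a : 'cV[R]_n) (v : 'cV[R]_n) :
  (forall i, f k i 0 @[k --> \oo] --> a i 0) ->
  dotv (f k) v @[k --> \oo] --> dotv a v.
Proof.
move=> H; apply: sum_cvg => i; apply: cvgM => //; exact: cvg_cst.
Qed.

Lemma trM (R : realType) n (A : 'M[R]_n) l : (A - l%:M)^T = A^T - l%:M.
Proof. by apply/matrixP => i j; rewrite !mxE eq_sym. Qed.

Theorem theorem1 (R : realType) (n : nat) (A : 'M[R]_n) (lambda : R)
  (eps eta : nat -> R) (u : nat -> 'cV[R]_n) (eta0 : R) (u0 : 'cV[R]_n) :
  is_real_eigenvalue A lambda ->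
  (forall k, (A - lambda%:M) *m u k = eps k *: (absv (u k) + eta k *: u k)) ->
  (forall k, eps k != 0) ->
  (forall k, enorm (u k) = 1) ->
  eps k @[k --> \oo] --> (0 : R) ->
  eta k @[k --> \oo] --> eta0 ->
  u k @[k --> \oo] --> u0 ->
  [/\ (A - lambda%:M) *m u0 = 0,
      u0 != 0 &
      forall v : 'cV[R]_n, (A^T - lambda%:M) *m v = 0 ->
        dotv (absv u0 + eta0 *: u0) v = 0].
Proof.
move=> _ Heq Hne Hn Heps Heta Hu.
have Hue i j : u k i j @[k --> \oo] --> u0 i j by exact: entry_cvg.
have Hw i j : (absv (u k) + eta k *: u k) i j @[k --> \oo]
     --> (absv u0 + eta0 *: u0) i j.
  rewrite !mxE; under eq_cvg do rewrite !mxE.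
  apply: cvgD; first exact: cvg_norm.
  exact: cvgM.
split.
- apply/matrixP => i j; rewrite [RHS]mxE.
  apply: (@uniq_lim _ (fun k => ((A - lambda%:M) *m u k) i j)).
    rewrite mxE; under eq_cvg do rewrite mxE.
    apply: sum_cvg => l; apply: cvgM => //; exact: cvg_cst.
  have -> : (fun k => ((A - lambda%:M) *m u k) i j) =
     (fun k => eps k * (absv (u k) + eta k *: u k) i j).
    by apply/funext => k; rewrite Heq mxE.
  have := cvgM Heps (Hw i j); rewrite mul0r; apply; exact: _.
- apply/eqP => u00.
  have H1 k : dotv (u k) (u k) = 1.
    have := Hn k; rewrite /enorm => H.
    have d0 : 0 <= dotv (u k) (u k).
      by rewrite /dotv; apply: sumr_ge0 => i _; rewrite -expr2 sqr_ge0.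
    by rewrite -(sqr_sqrtr d0) H expr1n.
  have Hd : dotv (u k) (u k) @[k --> \oo] --> dotv u0 u0.
    apply: sum_cvg => i; exact: cvgM.
  have E : (fun k => dotv (u k) (u k)) = (fun _ => 1) by apply/funext => k; rewrite H1.
  rewrite E in Hd.
  have := @uniq_lim R (fun=> 1) 1 _ (cvg_cst _) Hd.
  rewrite u00 dot0r => H10. by move: (@oner_neq0 R); rewrite H10 eqxx.
- move=> v Hv.
  have H0 k : dotv (absv (u k) + eta k *: u k) v = 0.
    have := Hne k; have : dotv ((A - lambda%:M) *m u k) v = 0.
      by rewrite dot_mul trM Hv dot0r.
    rewrite Heq dotZl => /eqP; rewrite mulf_eq0 => /orP[/eqP -> /eqP //|/eqP //].
  have Hd := @dot_cvg R n _ _ v (fun i => Hw i 0).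
  have E : (fun k => dotv (absv (u k) + eta k *: u k) v) = (fun _ => 0)
    by apply/funext => k; rewrite H0.
  rewrite E in Hd.
  have HH := (@uniq_lim R (fun=> 0) 0 _ (cvg_cst _) Hd). by rewrite -HH.
Qed.
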